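(* Let $k\ge 1$ be an integer. A fair coin is flipped independently until $\mathrm{H}^k\mathrm{T}$ ($k$ heads followed by a tails) first appears as consecutive flips; let $Y$ be the number of flips. Then for every $n\ge 1$, \[ E(Y^n) = 2^{k+1} b_n + \sum_{j=1}^{n-1} \binom{n}{j} E(Y^j) \sum_{i=1}^k i^{n-j}\, 2^{k-i}. \]
   Context: $b_n$ denotes the ordered Bell (Fubini) number $b_n=\sum_{i=0}^\infty \frac{i^n}{2^{i+1}}$ (with $0^0=1$), equivalently $b_n=\sum_{i=0}^n e_{n,i}2^{n-i}$ where $e_{n,i}$ are the Eulerian numbers ($e_{0,0}=1$, $e_{n,i}=0$ for $i\le0$ unless $n=i=0$ or for $i>n$, and $e_{n,i}=i e_{n-1,i}+(n-i+1)e_{n-1,i-1}$ otherwise); $b_0,b_1,b_2,\dots=1,1,3,13,75,\dots$. *)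

(* Defs.v *)
From Stdlib Require Import Reals.
From Coquelicot Require Import Coquelicot.
From mathcomp Require Import all_boot.
Local Open Scope nat_scope.

Set Implicit Arguments.
Unset Strict Implicit.
Unset Printing Implicit Defensive.

(* Coin flips: true = heads (H), false = tails (T). *)

Definition pattern (k : nat) : seq bool := rcons (nseq k true) false.

Definition ends_with_pattern (k : nat) (s : seq bool) (j : nat) : bool :=
  (k < j) && (drop (j - k.+1) (take j s) == pattern k).

Definition first_at (k m : nat) (s : m.-tuple bool) : bool :=
  ends_with_pattern k s m && [forall j : 'I_m, ~~ ends_with_pattern k s j].

(* P(Y = m) for a fair coin: each length-m flip sequence has probability 2^-m. *)
Definition probY (k m : nat) : R :=
  Rdiv (INR #|[set s : m.-tuple bool | first_at k s]|) (pow 2 m).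

Definition momentY (k n : nat) : R :=
  Series (fun m : nat => Rmult (pow (INR m) n) (probY k m)).

Fixpoint eulerian (n i : nat) : nat :=
  match n with
  | 0 => if i == 0 then 1 else 0
  | n'.+1 => match i with
             | 0 => 0
             | i'.+1 => i * eulerian n' i + (n - i + 1) * eulerian n' i'
             end
  end.

(* Ordered Bell (Fubini) numbers b_n = sum_{i=0}^n e_{n,i} 2^{n-i}. *)
Definition fubini (n : nat) : nat := \sum_(0 <= i < n.+1) eulerian n i * 2 ^ (n - i).

(* Main.v *)
Require Import Defs.
From Stdlib Require Import Reals Lra.
From Coquelicot Require Import Coquelicot.
From HB Require Import structures.
From mathcomp Require Import all_boot zify.

Section Comb.
Local Open Scope nat_scope.
Variable k : nat.

Definition Ew (t : seq bool) := ends_with_pattern k t (size t).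

Lemma ewp_take s j : ends_with_pattern k s j = (j <= size s) && Ew (take j s).
Proof.
rewrite /Ew /ends_with_pattern.
case: (leqP j (size s)) => H.
  by rewrite take_size size_takel // H.
rewrite take_oversize ?(ltnW H) //=.
apply/negbTE/negP => /andP[Hk /eqP Hd].
have := congr1 size Hd; rewrite size_drop /pattern size_rcons size_nseq.
move=> E; move: H Hk E; set a := size s; clear Hd; move: a => a. lia.
Qed.

Lemma Ew_rcons p b : Ew (rcons p b) = ~~ b && (k <= size p) && (drop (size p - k) p == nseq k true).
Proof.
rewrite /Ew /ends_with_pattern take_size size_rcons /pattern subSS ltnS.
case: (leqP k (size p)) => H; last by rewrite andbF.
rewrite drop_rcons ?leq_subr // eqseq_rcons andbT.
by case: b; rewrite ?andbF ?andbT.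
Qed.

Definition tr_ok (p : seq bool) (c : nat) :=
  forall k', (k' <= size p) && (drop (size p - k') p == nseq k' true) = (k' <= c).

Lemma nseqSr (T : Type) n (x : T) : nseq n.+1 x = rcons (nseq n x) x.
Proof. by elim: n => //= n ->. Qed.

Lemma tr_true p c : tr_ok p c -> tr_ok (rcons p true) c.+1.
Proof.
move=> H [|k']; first by rewrite subn0 drop_size.
rewrite size_rcons subSS ltnS nseqSr.
case: (leqP k' (size p)) => Hk.
  rewrite drop_rcons ?leq_subr // eqseq_rcons andbT ltnS; have := H k'; rewrite Hk /=. by [].
rewrite /= ltnS; have := H k'; rewrite leqNgt Hk /=. by [].
Qed.

Lemma tr_false p : tr_ok (rcons p false) 0.
Proof.
move=> [|k']; first by rewrite subn0 drop_size.
rewrite size_rcons subSS ltnS nseqSr.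
case: (leqP k' (size p)) => Hk //.
by rewrite drop_rcons ?leq_subr // eqseq_rcons andbF.
Qed.

Lemma tr_nil : tr_ok [::] 0.
Proof. by move=> [|k']. Qed.

Fixpoint g (c : nat) (s : seq bool) : bool :=
  match s with
  | [::] => false
  | true :: s' => g c.+1 s'
  | false :: s' => if k <= c then s' == [::] else g 0 s'
  end.

Lemma take_rcons' (p : seq bool) b j : j <= size p -> take j (rcons p b) = take j p.
Proof. by move=> H; rewrite -cats1 takel_cat. Qed.

Lemma inv s : forall p c, (forall j, j <= size p -> ~~ Ew (take j p)) -> tr_ok p c ->
  Ew (p ++ s) && all (fun j => ~~ Ew (take j (p ++ s))) (iota 0 (size p + size s)) = g c s.
Proof.
elim: s => [|b s IH] p c Hp Hc.
  by rewrite cats0 -{1}(take_size p) (negbTE (Hp _ (leqnn _))).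
have Hsz : size p + size (b :: s) = size (rcons p b) + size s by rewrite size_rcons addSnnS.
rewrite Hsz -cat_rcons.
case: b Hsz => Hsz /=.
  apply: IH; last exact: tr_true.
  move=> j; rewrite size_rcons leq_eqVlt => /orP[/eqP ->|Hj].
    by rewrite take_oversize ?size_rcons // Ew_rcons.
  by rewrite take_rcons' // Hp.
have Hk := Hc k.
case: (leqP k c) => Hkc.
  have HE : Ew (rcons p false) by rewrite Ew_rcons /= Hk Hkc.
  case: s {IH Hsz} => [|x s].
    rewrite cats0 HE andTb; apply/allP => j; rewrite mem_iota add0n addn0 size_rcons ltnS => /andP[_ Hj].
    by rewrite take_rcons' // Hp.
  apply/negbTE; rewrite negb_and; apply/orP; right.
  apply/allPn; exists (size (rcons p false)).
    by rewrite mem_iota add0n /= -addn1 leq_add2l.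
  by rewrite take_size_cat // HE.
apply: IH; last exact: tr_false.
move=> j; rewrite size_rcons leq_eqVlt => /orP[/eqP ->|Hj].
  by rewrite take_oversize ?size_rcons // Ew_rcons /= Hk leqNgt Hkc.
by rewrite take_rcons' // Hp.
Qed.

Lemma first_at_g m (s : m.-tuple bool) : first_at k s = g 0 s.
Proof.
rewrite /first_at ewp_take size_tuple leqnn /=.
rewrite -(@inv s [::] 0 _ tr_nil); last by move=> j; rewrite leqn0 => /eqP ->.
rewrite add0n size_tuple -{1}(size_tuple s) take_size; congr andb.
apply/forallP/allP => H j.
  rewrite mem_iota add0n => Hj; have := H (Ordinal Hj).
  by rewrite ewp_take size_tuple (ltnW Hj).
by rewrite ewp_take size_tuple (ltnW (ltn_ord j)) /= H // mem_iota add0n ltn_ord.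
Qed.

Definition Ncnt (c m : nat) := \sum_(s : m.-tuple bool) (g c s : nat).

Lemma card_first m : #|[set s : m.-tuple bool | first_at k s]| = Ncnt 0 m.
Proof.
rewrite -sum1_card big_mkcond /Ncnt; apply: eq_bigr => s _.
by rewrite inE first_at_g; case: (g 0 s).
Qed.

Lemma sum_tupleS (F : seq bool -> nat) m :
  \sum_(s : m.+1.-tuple bool) F s =
  \sum_(s : m.-tuple bool) F (true :: s) + \sum_(s : m.-tuple bool) F (false :: s).
Proof.
rewrite (reindex (fun x : bool * m.-tuple bool => [tuple of x.1 :: x.2])) /=; last first.
  apply: onW_bij; exists (fun s => (thead s, [tuple of behead s])).
    by move=> [b t] /=; rewrite theadE; congr pair; apply: val_inj.
  by move=> s; rewrite -tuple_eta.
rewrite -(pair_big xpredT xpredT (fun b (t : m.-tuple bool) => F (b :: t))) /=.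
by rewrite big_bool.
Qed.

Lemma tuple0_nil (s : 0.-tuple bool) : tval s = [::].
Proof. by case: s => [[|]]. Qed.

Lemma N0 c : Ncnt c 0 = 0.
Proof. by rewrite /Ncnt big1 // => s _; rewrite tuple0_nil. Qed.

Lemma NS c m : Ncnt c m.+1 = Ncnt c.+1 m + (if k <= c then (m == 0 : nat) else Ncnt 0 m).
Proof.
rewrite /Ncnt (sum_tupleS (fun t => (g c t : nat))) /=; congr addn.
case: (leqP k c) => _ //.
case: m => [|m].
  rewrite (eq_bigr (fun _ => 1)); last by move=> s _; rewrite tuple0_nil.
  by rewrite sum1_card card_tuple card_bool.
by rewrite big1 // => s _; case: s => [[|x s]].
Qed.

Lemma Nbig c m : k <= c -> Ncnt c m = (0 < m).
Proof.
elim: m c => [|m IH] c Hc; first by rewrite N0.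
rewrite NS Hc IH ?(leqW Hc) //; by case: m {IH}.
Qed.

Lemma Nrec m c : c <= k -> Ncnt c m =
  \sum_(1 <= i < (k - c).+1) (if i <= m then Ncnt 0 (m - i) else 0) + (k - c < m).
Proof.
elim: m c => [|m IH] c Hc.
  rewrite N0 ltn0 addn0 big_nat_cond big1 // => i /andP[/andP[Hi _] _].
  by rewrite leqn0 eqn0Ngt Hi.
rewrite NS.
case: (leqP k c) => Hkc.
  have -> : c = k by apply/eqP; rewrite eqn_leq Hc Hkc.
  rewrite Nbig // subnn big_geq //; by case: m {IH}.
rewrite IH // (_ : k - c = (k - c.+1).+1); last by move: Hkc; lia.
rewrite [in RHS]big_nat_recl // subn1 /= ltnS.
rewrite (addnC _ (Ncnt 0 m)) -!addnA; congr addn; congr addn.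
Qed.

Lemma Nrec0 m : Ncnt 0 m =
  \sum_(1 <= i < k.+1) (if i <= m then Ncnt 0 (m - i) else 0) + (k < m).
Proof. by rewrite Nrec // subn0. Qed.

End Comb.

Lemma Rplus_assoc' : associative Rplus.
Proof. by move=> x y z; rewrite Rplus_assoc. Qed.
HB.instance Definition _ := Monoid.isComLaw.Build R R0 Rplus Rplus_assoc' Rplus_comm Rplus_0_l.

Section Gen.
Local Open Scope R_scope.

Lemma INR_addn m n : INR (m + n)%N = INR m + INR n.
Proof. exact: plus_INR. Qed.
Lemma INR_muln m n : INR (m * n)%N = INR m * INR n.
Proof. exact: mult_INR. Qed.
Lemma INR_expn m n : INR (m ^ n)%N = INR m ^ n.
Proof. elim: n => [|n IH] //=; by rewrite expnS INR_muln IH. Qed.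

Lemma INR_sum (I : Type) (r : seq I) (P : pred I) (F : I -> nat) :
  INR (\sum_(i <- r | P i) F i)%N = \big[Rplus/R0]_(i <- r | P i) INR (F i).
Proof. by apply: (big_morph INR INR_addn). Qed.

Lemma big_Rmult_l (I : Type) (r : seq I) (P : pred I) (F : I -> R) c :
  c * \big[Rplus/R0]_(i <- r | P i) F i = \big[Rplus/R0]_(i <- r | P i) (c * F i).
Proof.
elim: r => [|x r IH]; first by rewrite !big_nil Rmult_0_r.
rewrite !big_cons; case: (P x); last exact: IH.
by rewrite Rmult_plus_distr_l IH.
Qed.

Lemma big_Rle (I : Type) (r : seq I) (P : pred I) (F G : I -> R) :
  (forall i, P i -> F i <= G i) ->
  \big[Rplus/R0]_(i <- r | P i) F i <= \big[Rplus/R0]_(i <- r | P i) G i.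
Proof.
move=> H; apply: (big_ind2 (fun a b => a <= b)) => //; first lra.
by move=> *; apply: Rplus_le_compat.
Qed.

Lemma iser (a b : nat -> R) (l l' : R) :
  (forall n, a n = b n) -> l = l' -> is_series a l -> is_series b l'.
Proof. by move=> H <-; apply: is_series_ext. Qed.
Arguments iser {a b l l'}.

Lemma is_series_scal' c (a : nat -> R) l :
  is_series a l -> is_series (fun n => c * a n) (c * l).
Proof. exact: (@is_series_scal_l R_AbsRing R_NormedModule c). Qed.

Lemma is_series_plus' (a b : nat -> R) la lb :
  is_series a la -> is_series b lb -> is_series (fun n => a n + b n) (la + lb).
Proof. exact: (@is_series_plus R_AbsRing R_NormedModule). Qed.

Lemma is_series_geom' q : Rabs q < 1 -> is_series (fun n => q ^ n) (/ (1 - q)).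
Proof. exact: is_series_geom. Qed.

Lemma is_series_incr_1' (a : nat -> R) l :
  is_series a (l + a 0%N) -> is_series (fun k => a k.+1) l.
Proof. exact: is_series_incr_1. Qed.

Lemma is_series_minus' (a b : nat -> R) la lb :
  is_series a la -> is_series b lb -> is_series (fun n => a n - b n) (la - lb).
Proof. exact: (@is_series_minus R_AbsRing R_NormedModule). Qed.

Lemma is_series_zero : is_series (fun _ : nat => 0) 0.
Proof.
have H : Rabs (/2) < 1 by rewrite Rabs_pos_eq; lra.
have H2 := is_series_geom _ H.
apply: (iser _ _ (is_series_scal' 0 _ _ H2)) => [n|]; by rewrite Rmult_0_l.
Qed.

Lemma is_series_big (I : Type) (r : seq I) (P : pred I) (F : I -> nat -> R) (L : I -> R) :
  (forall i, P i -> is_series (F i) (L i)) ->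
  is_series (fun m => \big[Rplus/R0]_(i <- r | P i) F i m) (\big[Rplus/R0]_(i <- r | P i) L i).
Proof.
move=> H; elim: r => [|x r IH].
  by apply: (iser _ _ is_series_zero) => [n|]; rewrite big_nil.
case Px: (P x).
  apply: (iser _ _ (is_series_plus' _ _ _ _ (H x Px) IH)) => [n|];
    by rewrite big_cons Px.
by apply: (iser _ _ IH) => [n|]; rewrite big_cons Px.
Qed.



Lemma is_series_shift N : forall (a : nat -> R) l,
  is_series (fun m => a (m + N)%N) l ->
  is_series a (l + \big[Rplus/R0]_(0 <= m < N) a m).
Proof.
elim: N => [|N IH] a l H.
  by apply: (iser _ _ H) => [n|]; rewrite ?addn0 // big_geq // Rplus_0_r.
have H1 := IH (fun k => a k.+1) l (is_series_ext _ _ _ (fun m => f_equal a (addnS m N)) H).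
apply: is_series_decr_1.
apply: (iser _ _ H1) => //.
rewrite big_nat_recl //= /plus /opp /=; ring.
Qed.

Lemma is_series_shift0 N (a : nat -> R) l :
  (forall m, (m < N)%N -> a m = 0) ->
  is_series (fun m => a (m + N)%N) l -> is_series a l.
Proof.
move=> Hz H; apply: (iser _ _ (is_series_shift _ _ _ H)) => //.
rewrite big_nat_cond big1 ?Rplus_0_r // => m /andP[/andP[_ Hm] _]; exact: Hz.
Qed.

Lemma is_series_finite N (a : nat -> R) :
  (forall m, (N <= m)%N -> a m = 0) ->
  is_series a (\big[Rplus/R0]_(0 <= m < N) a m).
Proof.
move=> Hz; apply: (iser _ _ (is_series_shift N a 0 _)) => //; first by rewrite Rplus_0_l.
apply: (iser _ _ is_series_zero) => // n; rewrite Hz //; lia.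
Qed.

End Gen.
Arguments iser {a b l l'}.

Section FubS.
Local Open Scope nat_scope.
Lemma eulerian_big n i : n < i -> eulerian n i = 0.
Proof.
elim: n i => [|n IH] [|i] //= Hi.
rewrite !IH ?muln0 //; lia.
Qed.

Lemma key_bin m n i : i <= n ->
  i * 'C(m + n.+1 - i, n.+1) + (n - i + 1) * 'C(m + n - i, n.+1) = m * 'C(m + n - i, n).
Proof.
move=> Hi.
have E1 : m + n.+1 - i = (m + n - i).+1 by lia.
rewrite E1 binS mulnDr.
have H2 := mul_bin_left (m + n - i) n.
set a := 'C(m + n - i, n.+1) in H2 *; set b := 'C(m + n - i, n) in H2 *.
have H3 : i * a + (n - i + 1) * a = n.+1 * a by rewrite -mulnDl; congr (_ * _); lia.
rewrite addnAC H3 H2 -mulnDl.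
case: (leqP i m) => Him.
  by congr (_ * _); lia.
by rewrite /b bin_small ?muln0 //; lia.
Qed.

Lemma worpitzky n m : m ^ n = \sum_(0 <= i < n.+1) eulerian n i * 'C(m + n - i, n).
Proof.
elim: n => [|n IH].
  by rewrite big_nat1 addn0 subn0 bin0.
rewrite expnS IH big_distrr /=.
rewrite [in RHS]big_nat_recl // mul0n add0n.
set F := fun i => i * eulerian n i * 'C(m + n.+1 - i, n.+1).
have HF : \sum_(0 <= i < n.+1) F i.+1 = \sum_(0 <= i < n.+1) F i.
  transitivity (\sum_(0 <= i < n.+2) F i).
    by rewrite [in RHS]big_nat_recl // {2}/F mul0n mul0n add0n.
  by rewrite [in LHS]big_nat_recr //= {2}/F (eulerian_big n n.+1) // muln0 mul0n addn0.
transitivity (\sum_(0 <= i < n.+1) (F i.+1 + (n - i + 1) * eulerian n i * 'C(m + n - i, n.+1))).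
  rewrite big_split /= HF -big_split /=.
  rewrite big_nat_cond [in RHS]big_nat_cond; apply: eq_bigr => i /andP[/andP[_ Hi] _].
  rewrite /F mulnCA -key_bin; last by lia.
  by rewrite mulnDr !mulnA ![eulerian n i * _]mulnC.
apply: eq_bigr => i _.
rewrite /F /=; have -> : m + n.+1 - i.+1 = m + n - i by lia.
by rewrite [RHS]mulnDl.
Qed.

Lemma bin_le m n : 'C(m + n, n) <= m.+1 ^ n.
Proof.
elim: n => [|n IH]; first by rewrite bin0.
have H := mul_bin_diag (m + n).+1 n.
rewrite /= -addnS in H.
rewrite -(leq_pmul2l (ltn0Sn n)) -H expnS mulnA.
apply: leq_mul; [lia | exact: IH].
Qed.

End FubS.

Section FubRS.
Local Open Scope R_scope.

Lemma is_lim_seq_pow (u : nat -> R) (l : R) n :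
  is_lim_seq u l -> is_lim_seq (fun m => u m ^ n) (l ^ n).
Proof.
move=> H; elim: n => [|n IH] /=; first exact: is_lim_seq_const.
exact: is_lim_seq_mult'.
Qed.

Lemma exs_pow n (th : R) : 0 < th < 1 -> ex_series (fun m => INR m ^ n * th ^ m).
Proof.
move=> Hth.
apply (proj2 (ex_series_incr_1 _)).
set a := fun m => INR m.+1 ^ n * th ^ m.+1.
have apos : forall m, 0 < a m.
  move=> m; apply: Rmult_lt_0_compat; apply: pow_lt; [apply: lt_0_INR; lia | lra].
apply: ex_series_Rabs.
apply: (ex_series_DAlembert a th); first lra.
  by move=> m; have := apos m; lra.
have Hinv : is_lim_seq (fun m => / INR m.+1) 0.
  have H1 : is_lim_seq (fun m => INR m.+1) p_infty.
    exact: (proj1 (is_lim_seq_incr_1 INR p_infty) is_lim_seq_INR).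
  have := is_lim_seq_inv _ _ H1; apply => //.
have H2 : is_lim_seq (fun m => (1 + / INR m.+1) ^ n * th) ((1 + 0) ^ n * th).
  apply: is_lim_seq_mult'; last exact: is_lim_seq_const.
  apply: is_lim_seq_pow; apply: is_lim_seq_plus'; [exact: is_lim_seq_const | exact: Hinv].
rewrite Rplus_0_r pow1 Rmult_1_l in H2.
apply: (is_lim_seq_ext _ _ _ _ H2) => m.
have Hp := apos m; have Hp1 := apos m.+1.
rewrite Rabs_pos_eq; last by apply: Rlt_le; apply: Rdiv_lt_0_compat.
rewrite /a.
have Ht : 0 < INR m.+1 by apply: lt_0_INR; lia.
have E1 : INR m.+2 ^ n = (1 + / INR m.+1) ^ n * INR m.+1 ^ n.
  rewrite -Rpow_mult_distr; f_equal; rewrite (S_INR m.+1); field; lra.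
rewrite E1; change (th ^ m.+2) with (th * th ^ m.+1).
have : INR m.+1 ^ n <> 0 by apply: pow_nonzero; lra.
have : th ^ m.+1 <> 0 by apply: pow_nonzero; lra.
move=> ? ?; field; split => //; lra.
Qed.

Lemma is_series_G n : is_series (fun m => INR 'C(m + n, n) / 2 ^ m) (2 ^ n.+1).
Proof.
elim: n => [|n IH].
  have H : Rabs (/2) < 1 by rewrite Rabs_pos_eq; lra.
  apply: (iser _ _ (is_series_geom' _ H)) => [m|].
    by rewrite addn0 bin0 /= pow_inv /Rdiv Rmult_1_l.
  simpl; field.
set a := fun m => INR 'C(m + n.+1, n.+1) / 2 ^ m.
have exa : ex_series a.
  apply: (ex_series_le _ (fun m => 2 * (INR m.+1 ^ n.+1 * (/2) ^ m.+1))).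
    move=> m; change (norm (a m)) with (Rabs (a m)); rewrite /a Rabs_pos_eq; last first.
      apply: Rmult_le_pos; [exact: pos_INR | apply: Rlt_le; apply: Rinv_0_lt_compat; apply: pow_lt; lra].
    rewrite pow_inv.
    have -> : 2 * (INR m.+1 ^ n.+1 * / 2 ^ m.+1) = INR m.+1 ^ n.+1 / 2 ^ m.
      change (2 ^ m.+1) with (2 * 2 ^ m); field; apply: pow_nonzero; lra.
    apply: Rmult_le_compat_r; first by apply: Rlt_le; apply: Rinv_0_lt_compat; apply: pow_lt; lra.
    rewrite -INR_expn; apply: le_INR; apply/leP; exact: bin_le.
  apply: (@ex_series_scal_l R_AbsRing R_NormedModule 2 (fun m => INR m.+1 ^ n.+1 * (/ 2) ^ m.+1)).
  apply (proj1 (ex_series_incr_1 (fun m => INR m ^ n.+1 * (/ 2) ^ m))).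
  apply: exs_pow; lra.
have Ha := Series_correct _ exa.
set L := Series a in Ha.
have a0 : a 0%N = 1 by rewrite /a add0n binn /=; field.
have H1 : is_series (fun m => a m.+1) (L - 1).
  apply: is_series_incr_1'; apply: (iser _ _ Ha) => //; rewrite a0; ring.
have H2 : is_series (fun m => INR 'C(m.+1 + n, n) / 2 ^ m.+1) (2 ^ n.+1 - 1).
  apply: (is_series_incr_1' (fun m => INR 'C(m + n, n) / 2 ^ m)).
  apply: (iser _ _ IH) => //; rewrite add0n binn /=; field.
have H3 := is_series_plus' _ _ _ _ (is_series_scal' (/2) _ _ Ha) H2.
have E : forall m, / 2 * a m + INR 'C(m.+1 + n, n) / 2 ^ m.+1 = a m.+1.
  move=> m; rewrite /a.
  have -> : (m.+1 + n.+1 = (m + n.+1).+1)%N by lia.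
  rewrite binS INR_addn (_ : (m + n.+1 = m.+1 + n)%N); last by lia.
  simpl; field; apply: pow_nonzero; lra.
have H4 := is_series_ext _ _ _ E H3.
have U := is_series_unique _ _ H1; rewrite (is_series_unique _ _ H4) in U.
apply: (iser _ _ Ha) => //.
simpl in U |- *; lra.
Qed.

Lemma is_series_big_nat (a b : nat) (F : nat -> nat -> R) (L : nat -> R) :
  (forall i, (a <= i < b)%N -> is_series (F i) (L i)) ->
  is_series (fun m => \big[Rplus/R0]_(a <= i < b) F i m) (\big[Rplus/R0]_(a <= i < b) L i).
Proof.
move=> H.
apply: (iser _ _ (is_series_big _ (iota a (b - a)) (fun i => (a <= i < b)%N && true) F L _)).
- by move=> m; rewrite [in RHS]big_nat_cond.
- by rewrite [in RHS]big_nat_cond.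
- by move=> i /andP[Hi _]; apply: H.
Qed.

Lemma fub_series n : is_series (fun m => INR m ^ n / 2 ^ m) (2 * INR (fubini n)).
Proof.
have E : forall m, \big[Rplus/R0]_(0 <= i < n.+1) (INR (eulerian n i) * (INR 'C(m + n - i, n) / 2 ^ m))
   = INR m ^ n / 2 ^ m.
  move=> m; rewrite -INR_expn worpitzky INR_sum /Rdiv Rmult_comm big_Rmult_l.
  by apply: eq_bigr => i _; rewrite INR_muln; ring.
apply: (iser _ _ (is_series_big_nat 0 n.+1 _ (fun i => INR (eulerian n i) * (2 ^ n.+1 / 2 ^ i)) _)).
- exact: E.
- rewrite /fubini INR_sum big_Rmult_l big_nat_cond [in RHS]big_nat_cond.
  apply: eq_bigr => i /andP[/andP[_ Hi] _].
  rewrite INR_muln INR_expn /=.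
  have -> : (2 ^ n = 2 ^ (n - i) * 2 ^ i)%R by rewrite -pow_add; f_equal; lia.
  have : 2 ^ i <> 0 by apply: pow_nonzero; lra.
  move=> ?; replace (1 + 1) with 2 by ring; field => //.
move=> i /andP[_ Hi].
apply: is_series_scal'.
apply: (is_series_shift0 i).
  move=> m Hm; rewrite bin_small /=; [lra | lia].
apply: (iser _ _ (is_series_scal' (/ 2 ^ i) _ _ (is_series_G n))).
  move=> m; rewrite (_ : (m + i + n - i = m + n)%N); last by lia.
  rewrite pow_add; field; split; apply: pow_nonzero; lra.
rewrite /Rdiv Rmult_comm; done.
Qed.

End FubRS.

Section Main.
Local Open Scope R_scope.
Variable k : nat.
Hypothesis hk : (1 <= k)%N.

Definition p m := probY k m.

Lemma pow2_pos m : 0 < 2 ^ m.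
Proof. apply: pow_lt; lra. Qed.

Lemma p_eq m : p m = INR (Ncnt k 0 m) / 2 ^ m.
Proof. by rewrite /p /probY card_first. Qed.

Lemma p_nonneg m : 0 <= p m.
Proof.
rewrite p_eq; apply: Rmult_le_pos; first exact: pos_INR.
apply: Rlt_le; apply: Rinv_0_lt_compat; exact: pow2_pos.
Qed.

Lemma prec m : p m = \big[Rplus/R0]_(1 <= i < k.+1) (if (i <= m)%N then p (m - i) / 2 ^ i else 0)
  + (if (k < m)%N then / 2 ^ m else 0).
Proof.
rewrite p_eq Nrec0 INR_addn INR_sum /Rdiv Rmult_plus_distr_r.
rewrite (Rmult_comm _ (/ 2 ^ m)) big_Rmult_l; congr Rplus.
  apply: eq_bigr => i _; case: ifP => Hi; last by rewrite Rmult_0_r.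
  rewrite p_eq.
  have -> : 2 ^ m = 2 ^ (m - i) * 2 ^ i by rewrite -pow_add; f_equal; lia.
  have := pow2_pos (m - i); have := pow2_pos i; move=> ? ?.
  field; lra.
by case: (k < m)%N => /=; lra.
Qed.

Lemma geom_sum (x : R) n : (1 - x) * \big[Rplus/R0]_(1 <= i < n.+1) x ^ i = x - x ^ n.+1.
Proof.
elim: n => [|n IH]; first by rewrite big_geq //=; ring.
rewrite big_nat_recr //= Rmult_plus_distr_l IH /=; ring.
Qed.

Lemma half_pow_le1 n : (/2) ^ n <= 1.
Proof.
elim: n => [|n IH] /=; first lra.
have : 0 <= (/2) ^ n by apply: pow_le; lra.
nra.
Qed.

Definition xx := /2 + (/2) ^ k.+1 / 4.
Definition S := \big[Rplus/R0]_(1 <= i < k.+1) xx ^ i.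
Definition CC := / (1 - S).
Definition th := / (2 * xx).

Lemma xx_bounds : /2 < xx < 1.
Proof.
have H1 := half_pow_le1 k.
have H2 : 0 < (/2) ^ k by apply: pow_lt; lra.
rewrite /xx /=; split; nra.
Qed.

Lemma S_lt1 : 0 <= S < 1.
Proof.
have [H1 H2] := xx_bounds.
split.
  rewrite /S; apply: (big_ind (fun a => 0 <= a)); first lra.
    by move=> a b ? ?; lra.
  by move=> i _; apply: pow_le; lra.
have G := geom_sum xx k.
have Hy : (/2) ^ k.+1 <= xx ^ k.+1 by apply: pow_incr; lra.
have Hy0 : 0 < (/2) ^ k.+1 by apply: pow_lt; lra.
have : xx - xx ^ k.+1 < 1 - xx by rewrite /xx in Hy |- *; lra.
rewrite -G /S => H.
have : (1 - xx) * (\big[Rplus/R0]_(1 <= i < k.+1) xx ^ i) < (1 - xx) * 1 by lra.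
move/Rmult_lt_reg_l; apply; lra.
Qed.

Lemma th_bounds : 0 < th < 1.
Proof.
have [H1 H2] := xx_bounds; rewrite /th; split.
  apply: Rinv_0_lt_compat; lra.
rewrite -Rinv_1; apply: Rinv_lt_contravar; lra.
Qed.

Lemma CC_pos : 0 < CC.
Proof. have := S_lt1; rewrite /CC => ?; apply: Rinv_0_lt_compat; lra. Qed.

Lemma th_xx : th * xx = / 2.
Proof. have := xx_bounds; rewrite /th => ?; field; lra. Qed.

Lemma p_bound m : p m <= CC * th ^ m.
Proof.
elim/ltn_ind: m => m IH.
have [Hx1 Hx2] := xx_bounds; have [Ht1 Ht2] := th_bounds; have HC := CC_pos.
have [HS1 HS2] := S_lt1.
have Htm : 0 < th ^ m by apply: pow_lt.
rewrite prec.
apply: (Rle_trans _ (\big[Rplus/R0]_(1 <= i < k.+1) (CC * th ^ m * xx ^ i) + th ^ m)).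
  apply: Rplus_le_compat.
    rewrite big_nat_cond [X in _ <= X]big_nat_cond.
    apply: big_Rle => i /andP[/andP[Hi1 _] _].
    have Hxi : 0 < xx ^ i by apply: pow_lt; lra.
    case: ifP => Hi; last by apply: Rlt_le; apply: Rmult_lt_0_compat => //; apply: Rmult_lt_0_compat.
    have E : th ^ m * xx ^ i = th ^ (m - i) / 2 ^ i.
      have -> : m = ((m - i) + i)%coq_nat by lia.
      rewrite pow_add Rmult_assoc -Rpow_mult_distr th_xx pow_inv.
      rewrite (_ : ((m - i + i)%coq_nat - i)%N = (m - i)%N); last by lia.
      by [].
    rewrite Rmult_assoc E /Rdiv -Rmult_assoc.
    apply: Rmult_le_compat_r; first by apply: Rlt_le; apply: Rinv_0_lt_compat; exact: pow2_pos.
    apply: IH; lia.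
  case: ifP => _; last lra.
  have E : / 2 ^ m = th ^ m * xx ^ m by rewrite -Rpow_mult_distr th_xx pow_inv.
  rewrite E; have : xx ^ m <= 1.
    have -> : 1 = 1 ^ m by rewrite pow1.
    apply: pow_incr; lra.
  nra.
rewrite -big_Rmult_l -/S.
have : CC * (1 - S) = 1 by rewrite /CC; field; lra.
nra.
Qed.

Lemma ex_u n : ex_series (fun m => INR m ^ n * p m).
Proof.
apply: (ex_series_le _ (fun m => CC * (INR m ^ n * th ^ m))).
  move=> m; change (norm (INR m ^ n * p m)) with (Rabs (INR m ^ n * p m)).
  have H0 : 0 <= INR m ^ n by apply: pow_le; exact: pos_INR.
  rewrite Rabs_pos_eq; last by apply: Rmult_le_pos => //; exact: p_nonneg.
  have := p_bound m; nra.
apply: (@ex_series_scal_l R_AbsRing R_NormedModule CC (fun m => INR m ^ n * th ^ m)).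
exact: exs_pow th_bounds.
Qed.

Definition Em n := momentY k n.

Lemma Hser n : is_series (fun m => INR m ^ n * p m) (Em n).
Proof. exact: (Series_correct _ (ex_u n)). Qed.

Definition W i n := \big[Rplus/R0]_(0 <= j < n.+1) (INR 'C(n, j) * INR i ^ (n - j) * Em j).

Lemma w_series n i : is_series (fun m => if (i <= m)%N then INR m ^ n * p (m - i) else 0) (W i n).
Proof.
apply: (is_series_shift0 i) => [m Hm|]; first by rewrite leqNgt Hm.
apply: (iser _ _ (is_series_big_nat 0 n.+1 (fun j m => INR 'C(n,j) * INR i ^ (n-j) * (INR m ^ j * p m)) _ _)) => [m||].
- rewrite leq_addl addnK -INR_expn addnC expnDn INR_sum big_mkord.
  rewrite Rmult_comm big_Rmult_l; apply: eq_bigr => j _.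
  rewrite !INR_muln !INR_expn; ring.
- by [].
- by move=> j _; apply: is_series_scal'; exact: Hser.
Qed.

Definition Fsum n := \big[Rplus/R0]_(0 <= m < k.+1) (INR m ^ n / 2 ^ m).

Lemma Eq1 n : Em n = \big[Rplus/R0]_(1 <= i < k.+1) (/ 2 ^ i * W i n) + (2 * INR (fubini n) - Fsum n).
Proof.
have Hf := is_series_finite k.+1 (fun m => if (m < k.+1)%N then INR m ^ n / 2 ^ m else 0)
  (fun m Hm => ltac:(by cbv beta; rewrite (leq_gtF Hm))).
have Ht := is_series_minus' _ _ _ _ (fub_series n) Hf.
have Hw := is_series_big_nat 1 k.+1 (fun i m => / 2 ^ i * (if (i <= m)%N then INR m ^ n * p (m - i) else 0))
   (fun i => / 2 ^ i * W i n) (fun i _ => is_series_scal' _ _ _ (w_series n i)).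
have Hu := is_series_plus' _ _ _ _ Hw Ht.
have Hext : forall m, \big[Rplus/R0]_(1 <= i < k.+1) (/ 2 ^ i * (if (i <= m)%N then INR m ^ n * p (m - i) else 0))
   + (INR m ^ n / 2 ^ m - (if (m < k.+1)%N then INR m ^ n / 2 ^ m else 0)) = INR m ^ n * p m.
  move=> m; rewrite [in RHS]prec Rmult_plus_distr_l big_Rmult_l; congr Rplus.
    by apply: eq_bigr => i _; case: ifP => _; rewrite /Rdiv; ring.
  by rewrite ltnS leqNgt; case: (k < m)%N; rewrite /= /Rdiv; ring.
have := is_series_unique _ _ (iser Hext erefl Hu).
rewrite /Em /momentY /p => ->; congr Rplus; congr Rminus.
by rewrite /Fsum; apply: eq_big_nat => m /andP[_ Hm]; rewrite Hm.
Qed.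

Definition sig := \big[Rplus/R0]_(1 <= i < k.+1) / 2 ^ i.

Lemma sig_eq : sig = 1 - (/2) ^ k.
Proof.
have G := geom_sum (/2) k.
rewrite /sig (eq_bigr (fun i => (/2) ^ i)); last by move=> i _; rewrite pow_inv.
simpl in G; lra.
Qed.

Lemma E0 : Em 0 = 1.
Proof.
have H := Eq1 0.
have HW : forall i, W i 0 = Em 0.
  by move=> i; rewrite /W big_nat1 bin0 subn0 /=; ring.
have HF : Fsum 0 = 1 + sig.
  rewrite /Fsum (@big_cat_nat _ _ _ 1) // big_nat1 /sig; simpl; rewrite /Rdiv Rmult_1_l Rinv_1.
  by congr Rplus; apply: eq_bigr => i _; ring.
have Hfub : fubini 0 = 1%N by rewrite /fubini big_nat1.
rewrite (eq_bigr (fun i => Em 0 * / 2 ^ i)) in H; last by move=> i _; rewrite HW Rmult_comm.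
rewrite -big_Rmult_l -/sig HF sig_eq Hfub /= in H.
have Hh : 0 < (/2) ^ k by apply: pow_lt; lra.
have H2 : (Em 0 - 1) * (/2) ^ k = 0 by nra.
case: (Rmult_integral _ _ H2); lra.
Qed.

Lemma main_id n : (1 <= n)%N ->
  Em n = 2 ^ (k + 1) * INR (fubini n) +
    \big[Rplus/R0]_(1 <= j < n) (INR 'C(n, j) * Em j *
       \big[Rplus/R0]_(1 <= i < k.+1) (INR i ^ (n - j) * 2 ^ (k - i))).
Proof.
case: n => [//|n] _.
have H := Eq1 n.+1.
set Bj := fun i => \big[Rplus/R0]_(1 <= j < n.+1) (INR 'C(n.+1, j) * INR i ^ (n.+1 - j) * Em j).
have HW : forall i, W i n.+1 = INR i ^ n.+1 + Bj i + Em n.+1.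
  move=> i; rewrite /W (@big_cat_nat _ _ _ 1) // big_nat1 (@big_cat_nat _ _ _ n.+1) // big_nat1.
  rewrite bin0 subn0 binn subnn E0 /Bj; simpl; ring.
have HF : Fsum n.+1 = \big[Rplus/R0]_(1 <= i < k.+1) (INR i ^ n.+1 / 2 ^ i).
  rewrite /Fsum (@big_cat_nat _ _ _ 1) // big_nat1; simpl; by rewrite /Rdiv !Rmult_0_l Rplus_0_l.
rewrite (eq_bigr (fun i => / 2 ^ i * INR i ^ n.+1 + / 2 ^ i * Bj i + Em n.+1 * / 2 ^ i)) in H;
  last by move=> i _; rewrite HW; ring.
rewrite !big_split /= -big_Rmult_l -/sig sig_eq HF in H.
have Hsame : \big[Rplus/R0]_(1 <= i < k.+1) (/ 2 ^ i * INR i ^ n.+1) =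
   \big[Rplus/R0]_(1 <= i < k.+1) (INR i ^ n.+1 / 2 ^ i).
  by apply: eq_bigr => i _; rewrite /Rdiv Rmult_comm.
rewrite Hsame in H.
set X := \big[Rplus/R0]_(1 <= i < k.+1) (/ 2 ^ i * Bj i) in H.
have HX : 2 ^ k * X = \big[Rplus/R0]_(1 <= j < n.+1) (INR 'C(n.+1, j) * Em j *
       \big[Rplus/R0]_(1 <= i < k.+1) (INR i ^ (n.+1 - j) * 2 ^ (k - i))).
  rewrite /X big_Rmult_l.
  rewrite [in RHS](eq_bigr (fun j => \big[Rplus/R0]_(1 <= i < k.+1) (INR 'C(n.+1, j) * Em j * (INR i ^ (n.+1 - j) * 2 ^ (k - i))))); last by move=> j _; rewrite big_Rmult_l.
  rewrite exchange_big_nat; apply: eq_big_nat => i /andP[Hi1 Hi2].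
  rewrite /Bj -Rmult_assoc big_Rmult_l; apply: eq_bigr => j _.
  have -> : 2 ^ k = 2 ^ (k - i) * 2 ^ i by rewrite -pow_add; f_equal; lia.
  have := pow2_pos i; move=> ?; field; lra.
rewrite -HX addn1.
have Hh : (/2) ^ k * 2 ^ k = 1 by rewrite pow_inv; field; apply: pow_nonzero; lra.
have H2 : Em n.+1 * (/2) ^ k = X + 2 * INR (fubini n.+1) by lra.
change (2 ^ k.+1) with (2 * 2 ^ k).
rewrite -[Em n.+1]Rmult_1_r -Hh -Rmult_assoc H2; ring.
Qed.

End Main.

Theorem corollary3p6 (k n : nat) (hk : (1 <= k)%N) (hn : (1 <= n)%N) :
  ex_series (fun m : nat => Rmult (pow (INR m) n) (probY k m)) /\
  momentY k n =
    Rplus (Rmult (pow 2 (k + 1)) (INR (fubini n)))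
      (\big[Rplus/R0]_(1 <= j < n)
         Rmult (Rmult (INR 'C(n, j)) (momentY k j))
               (\big[Rplus/R0]_(1 <= i < k.+1)
                   Rmult (pow (INR i) (n - j)) (pow 2 (k - i)))).
Proof.
split; first exact (ex_u k hk n).
exact (main_id k hk n hn).
Qed.
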